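(* Let $\mathcal D$ be a semicartesian symmetric monoidal category. Then the following are equivalent: (1) $\mathcal D$ can be made into a Markov category (i.e. there exist morphisms $\mathrm{copy}_X\colon X\to X\otimes X$ for all objects $X$ which, together with the unique morphisms $\mathrm{del}_X\colon X\to I$, make $\mathcal D$ a Markov category) in which, for every object $X$, the copy morphism $\mathrm{copy}_X$ is an initial dilation of $\mathrm{id}_X$. (2) For every object $X$, the identity $\mathrm{id}_X$ admits an initial dilation $\iota\colon X\to X\otimes E$ such that the marginal $(\mathrm{del}_X\otimes\mathrm{id}_E)\circ\iota\colon X\to E$ is non-creative. Moreover, if these conditions hold, then the Markov category structure in (1) is unique.
   Context: A symmetric monoidal category $(\mathcal D,\otimes,I)$ is semicartesian if the unit $I$ is terminal; write $\mathrm{del}_X\colon X\to I$ for the unique morphism (unitors suppressed). A Markov category is a symmetric monoidal category in which every object $X$ carries morphisms $\mathrm{copy}_X\colon X\to X\otimes X$ and $\mathrm{del}_X\colon X\to I$ forming a commutative comonoid, compatible with the monoidal structure ($\mathrm{copy}_{X\otimes Y}$ is $\mathrm{copy}_X\otimes\mathrm{copy}_Y$ followed by swapping the middle factors, $\mathrm{del}_{X\otimes Y}=\mathrm{del}_X\otimes\mathrm{del}_Y$), with $I$ terminal. In a semicartesian category: a dilation of $p\colon A\to X$ is a morphism $\pi\colon A\to X\otimes E$ for some object $E$ (the environment) with $(\mathrm{id}_X\otimes\mathrm{del}_E)\circ\pi=p$. Given a dilation $\pi\colon A\to X\otimes E$ of $p$ and morphisms $f_1,f_2\colon E\to E'$,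 say $f_1$ and $f_2$ are $\pi$-dilationally equal if for every dilation $\rho\colon A\to X\otimes E\otimes F$ of $\pi$ one has $(\mathrm{id}_X\otimes f_1\otimes\mathrm{id}_F)\circ\rho=(\mathrm{id}_X\otimes f_2\otimes\mathrm{id}_F)\circ\rho$. A dilation $\pi\colon A\to X\otimes E$ of $p$ is initial if for every dilation $\pi'\colon A\to X\otimes E'$ of $p$ there exists $f\colon E\to E'$ with $(\mathrm{id}_X\otimes f)\circ\pi=\pi'$, and any two such $f$ are $\pi$-dilationally equal. A morphism $p\colon A\to X$ is non-creative if every dilation $\pi\colon A\to X\otimes E$ of $p$ is of the form $\pi=(p\otimes\mathrm{id}_E)\circ\iota$ for some dilation $\iota\colon A\to A\otimes E$ of $\mathrm{id}_A$. *)

(* Defs.v *)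
Set Implicit Arguments.

Record SMC := {
  ob : Type;
  hom : ob -> ob -> Type;
  comp : forall A B C : ob, hom B C -> hom A B -> hom A C;
  idm : forall A, hom A A;
  tens : ob -> ob -> ob;
  tensm : forall A B C D, hom A B -> hom C D -> hom (tens A C) (tens B D);
  unit : ob;
  assoc : forall A B C, hom (tens (tens A B) C) (tens A (tens B C));
  assoc_inv : forall A B C, hom (tens A (tens B C)) (tens (tens A B) C);
  lunit : forall A, hom (tens unit A) A;
  lunit_inv : forall A, hom A (tens unit A);
  runit : forall A, hom (tens A unit) A;
  runit_inv : forall A, hom A (tens A unit);
  braid : forall A B, hom (tens A B) (tens B A);
  comp_assoc : forall A B C D (f : hom A B) (g : hom B C) (h : hom C D),
      comp h (comp g f) = comp (comp h g) f;
  comp_id_l : forall A B (f : hom A B), comp (idm B) f = f;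
  comp_id_r : forall A B (f : hom A B), comp f (idm A) = f;
  tens_id : forall A B, tensm (idm A) (idm B) = idm (tens A B);
  tens_comp : forall A B C A' B' C' (f : hom A B) (g : hom B C)
      (f' : hom A' B') (g' : hom B' C'),
      tensm (comp g f) (comp g' f') = comp (tensm g g') (tensm f f');
  assoc_iso1 : forall A B C, comp (assoc A B C) (assoc_inv A B C) = idm _;
  assoc_iso2 : forall A B C, comp (assoc_inv A B C) (assoc A B C) = idm _;
  lunit_iso1 : forall A, comp (lunit A) (lunit_inv A) = idm _;
  lunit_iso2 : forall A, comp (lunit_inv A) (lunit A) = idm _;
  runit_iso1 : forall A, comp (runit A) (runit_inv A) = idm _;
  runit_iso2 : forall A, comp (runit_inv A) (runit A) = idm _;
  braid_sym : forall A B, comp (braid B A) (braid A B) = idm _;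
  assoc_nat : forall A A' B B' C C' (f : hom A A') (g : hom B B') (h : hom C C'),
      comp (assoc A' B' C') (tensm (tensm f g) h)
      = comp (tensm f (tensm g h)) (assoc A B C);
  lunit_nat : forall A B (f : hom A B),
      comp (lunit B) (tensm (idm unit) f) = comp f (lunit A);
  runit_nat : forall A B (f : hom A B),
      comp (runit B) (tensm f (idm unit)) = comp f (runit A);
  braid_nat : forall A A' B B' (f : hom A A') (g : hom B B'),
      comp (braid A' B') (tensm f g) = comp (tensm g f) (braid A B);
  pentagon : forall A B C D,
      comp (assoc A B (tens C D)) (assoc (tens A B) C D)
      = comp (tensm (idm A) (assoc B C D))
             (comp (assoc A (tens B C) D) (tensm (assoc A B C) (idm D)));
  triangle : forall A B,
      comp (tensm (idm A) (lunit B)) (assoc A unit B) = tensm (runit A) (idm B);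
  hexagon : forall A B C,
      comp (assoc B C A) (comp (braid A (tens B C)) (assoc A B C))
      = comp (tensm (idm B) (braid A C))
             (comp (assoc B A C) (tensm (braid A B) (idm C)))
}.

Arguments comp {s A B C} _ _.
Arguments idm {s} A.
Arguments tens {s} _ _.
Arguments tensm {s A B C D} _ _.
Arguments unit {s}.
Arguments assoc {s} A B C.
Arguments assoc_inv {s} A B C.
Arguments lunit {s} A.
Arguments lunit_inv {s} A.
Arguments runit {s} A.
Arguments runit_inv {s} A.
Arguments braid {s} A B.

Notation "g ∘ f" := (comp g f) (at level 40, left associativity).

Record SemicartSMC := {
  smc :> SMC;
  del : forall A : ob smc, hom smc A unit;
  del_unique : forall (A : ob smc) (f : hom smc A unit), f = del A
}.

Arguments del {s} A.

Section Dilations.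
Variable C : SemicartSMC.

Definition is_dilation {A X E : ob C} (p : hom C A X) (pi : hom C A (tens X E)) : Prop :=
  runit X ∘ tensm (idm X) (del E) ∘ pi = p.

Definition dil_equal {A X E E' : ob C} (pi : hom C A (tens X E)) (f1 f2 : hom C E E') : Prop :=
  forall (F : ob C) (rho : hom C A (tens (tens X E) F)),
    is_dilation pi rho ->
    tensm (tensm (idm X) f1) (idm F) ∘ rho = tensm (tensm (idm X) f2) (idm F) ∘ rho.

Definition initial_dilation {A X E : ob C} (p : hom C A X) (pi : hom C A (tens X E)) : Prop :=
  is_dilation p pi /\
  forall (E' : ob C) (pi' : hom C A (tens X E')),
    is_dilation p pi' ->
    (exists f : hom C E E', tensm (idm X) f ∘ pi = pi') /\
    (forall f1 f2 : hom C E E',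
        tensm (idm X) f1 ∘ pi = pi' -> tensm (idm X) f2 ∘ pi = pi' ->
        dil_equal pi f1 f2).

Definition non_creative {A X : ob C} (p : hom C A X) : Prop :=
  forall (E : ob C) (pi : hom C A (tens X E)),
    is_dilation p pi ->
    exists iota : hom C A (tens A E),
      is_dilation (idm A) iota /\ pi = tensm p (idm E) ∘ iota.

Definition middle_swap (X Y : ob C) : hom C (tens (tens X X) (tens Y Y)) (tens (tens X Y) (tens X Y)) :=
  assoc_inv X Y (tens X Y)
  ∘ tensm (idm X) (assoc Y X Y ∘ tensm (braid X Y) (idm Y) ∘ assoc_inv X Y Y)
  ∘ assoc X X (tens Y Y).

Definition is_markov_copy (copy : forall X : ob C, hom C X (tens X X)) : Prop :=
  (forall X, lunit X ∘ tensm (del X) (idm X) ∘ copy X = idm X) /\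
  (forall X, runit X ∘ tensm (idm X) (del X) ∘ copy X = idm X) /\
  (forall X, assoc X X X ∘ tensm (copy X) (idm X) ∘ copy X
             = tensm (idm X) (copy X) ∘ copy X) /\
  (forall X, braid X X ∘ copy X = copy X) /\
  (forall X Y, copy (tens X Y) = middle_swap X Y ∘ tensm (copy X) (copy Y)) /\
  (forall X Y : ob C, del (tens X Y) = lunit unit ∘ tensm (del X) (del Y)).

End Dilations.

Arguments is_dilation {C A X E} _ _.
Arguments dil_equal {C A X E E'} _ _ _.
Arguments initial_dilation {C A X E} _ _.
Arguments non_creative {C A X} _.
Arguments is_markov_copy {C} _.

(* Main.v *)
Require Import Defs.
From Stdlib Require Import IndefiniteDescription.

Section Coh.
Variable C : SemicartSMC.

Ltac ra := repeat rewrite <- comp_assoc.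
Ltac simp := repeat (rewrite comp_id_l || rewrite comp_id_r || rewrite tens_id).
Ltac grp h := rewrite (comp_assoc _ _ _ _ _ _ _ h).

Lemma rw_r {A B D W : ob C} (g : hom C B D) (f : hom C A B) (h : hom C A D) :
  g ∘ f = h -> forall (k : hom C W A), g ∘ (f ∘ k) = h ∘ k.
Proof. intros H k. rewrite comp_assoc, H. reflexivity. Qed.

Lemma cancel_lunit {A B : ob C} (f g : hom C A B) :
  tensm (idm unit) f = tensm (idm unit) g -> f = g.
Proof.
  intros H.
  assert (E : f ∘ lunit A = g ∘ lunit A) by (rewrite <- !lunit_nat, H; reflexivity).
  rewrite <- (comp_id_r _ _ _ f), <- (comp_id_r _ _ _ g), <- (lunit_iso1 _ A), !comp_assoc, E.
  reflexivity.
Qed.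

Lemma cancel_runit {A B : ob C} (f g : hom C A B) :
  tensm f (idm unit) = tensm g (idm unit) -> f = g.
Proof.
  intros H.
  assert (E : f ∘ runit A = g ∘ runit A) by (rewrite <- !runit_nat, H; reflexivity).
  rewrite <- (comp_id_r _ _ _ f), <- (comp_id_r _ _ _ g), <- (runit_iso1 _ A), !comp_assoc, E.
  reflexivity.
Qed.

Lemma epi_cancel {A B D : ob C} (p : hom C A B) (q : hom C B A) (f g : hom C B D) :
  p ∘ q = idm B -> f ∘ p = g ∘ p -> f = g.
Proof.
  intros Hpq H.
  rewrite <- (comp_id_r _ _ _ f), <- (comp_id_r _ _ _ g), <- Hpq, !comp_assoc, H. reflexivity.
Qed.

Lemma mono_cancel {A B D : ob C} (p : hom C B D) (q : hom C D B) (f g : hom C A B) :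
  q ∘ p = idm B -> p ∘ f = p ∘ g -> f = g.
Proof.
  intros Hpq H.
  rewrite <- (comp_id_l _ _ _ f), <- (comp_id_l _ _ _ g), <- Hpq, <- !comp_assoc, H. reflexivity.
Qed.

Lemma tens_idl_comp {A B D E: ob C} (f : hom C A B) (g : hom C B D) :
  tensm (idm E) (g ∘ f) = tensm (idm E) g ∘ tensm (idm E) f.
Proof. rewrite <- tens_comp, comp_id_l. reflexivity. Qed.

Lemma tens_idr_comp {A B D E: ob C} (f : hom C A B) (g : hom C B D) :
  tensm (g ∘ f) (idm E) = tensm g (idm E) ∘ tensm f (idm E).
Proof. rewrite <- tens_comp, comp_id_l. reflexivity. Qed.

Lemma kelly_l (A B : ob C) :
  lunit (tens A B) ∘ assoc unit A B = tensm (lunit A) (idm B).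
Proof.
  apply cancel_lunit.
  apply (epi_cancel (assoc unit (tens unit A) B ∘ tensm (assoc unit unit A) (idm B))
                    (tensm (assoc_inv unit unit A) (idm B) ∘ assoc_inv unit (tens unit A) B)).
  { rewrite <- comp_assoc; grp (tensm (assoc unit unit A) (idm B)).
    rewrite <- tens_comp, assoc_iso1; simp; apply assoc_iso1. }
  rewrite tens_idl_comp. ra.
  rewrite <- pentagon.
  rewrite comp_assoc, triangle.
  rewrite <- (tens_id _ A B), <- assoc_nat.
  rewrite comp_assoc, <- assoc_nat, <- comp_assoc, <- tens_comp, triangle, comp_id_l.
  reflexivity.
Qed.

Lemma kelly_r (A B : ob C) :
  tensm (idm A) (runit B) ∘ assoc A B unit = runit (tens A B).
Proof.
  apply cancel_runit.
  apply (mono_cancel (assoc A B unit) (assoc_inv A B unit)); [apply assoc_iso2|].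
  rewrite <- (triangle _ (tens A B) unit).
  replace (idm (tens A B)) with (tensm (idm A) (idm B)) by apply tens_id.
  rewrite comp_assoc, assoc_nat. ra.
  rewrite pentagon.
  grp (tensm (idm A) (tensm (idm B) (lunit unit))).
  rewrite <- tens_idl_comp, triangle.
  grp (tensm (idm A) (tensm (runit B) (idm unit))).
  rewrite <- assoc_nat. ra. rewrite <- tens_idr_comp. reflexivity.
Qed.

Lemma braid_unit_r (A : ob C) : lunit A ∘ braid A unit = runit A.
Proof.
  assert (H : forall C0, braid A C0 ∘ tensm (runit A) (idm C0)
                        = braid A C0 ∘ tensm (lunit A ∘ braid A unit) (idm C0)).
  { intros C0.
    transitivity (lunit (tens C0 A) ∘ (assoc unit C0 A ∘ (braid A (tens unit C0) ∘ assoc A unit C0))).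
    - symmetry. rewrite comp_assoc, kelly_l, comp_assoc, <- braid_nat, <- comp_assoc, triangle.
      reflexivity.
    - rewrite hexagon. rewrite comp_assoc, lunit_nat, <- comp_assoc.
      grp (lunit (tens A C0)). rewrite kelly_l, <- tens_idr_comp. reflexivity. }
  apply cancel_runit.
  apply (mono_cancel (braid A unit) (braid unit A)); [apply braid_sym|].
  symmetry. apply H.
Qed.

Lemma braid_unit_l (A : ob C) : runit A ∘ braid unit A = lunit A.
Proof.
  rewrite <- braid_unit_r, <- comp_assoc, braid_sym, comp_id_r. reflexivity.
Qed.


Lemma tens_split {A B A' B' : ob C} (f : hom C A A') (g : hom C B B') :
  tensm f g = tensm (idm A') g ∘ tensm f (idm B).
Proof. rewrite <- tens_comp, comp_id_l, comp_id_r. reflexivity. Qed.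

Lemma tens_split2 {A B A' B' : ob C} (f : hom C A A') (g : hom C B B') :
  tensm f g = tensm f (idm B') ∘ tensm (idm A) g.
Proof. rewrite <- tens_comp, comp_id_l, comp_id_r. reflexivity. Qed.

Lemma tt_comp {X A B D F : ob C} (a : hom C B D) (b : hom C A B) :
  tensm (tensm (idm X) a) (idm F) ∘ tensm (tensm (idm X) b) (idm F)
  = tensm (tensm (idm X) (a ∘ b)) (idm F).
Proof. rewrite <- tens_idr_comp, <- tens_idl_comp. reflexivity. Qed.

Lemma exists_copy (X E : ob C) (iota : hom C X (tens X E)) :
  initial_dilation (idm X) iota -> non_creative (lunit E ∘ tensm (del X) (idm E) ∘ iota) ->
  exists c : hom C X (tens X X), initial_dilation (idm X) c /\
     lunit X ∘ tensm (del X) (idm X) ∘ c = idm X.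
Proof.
  intros [Hd Hin] Hnc. unfold is_dilation in Hd.
  set (m := lunit E ∘ tensm (del X) (idm E) ∘ iota) in *.
  assert (Hpi : is_dilation m (braid X E ∘ iota)).
  { unfold is_dilation. ra. grp (tensm (idm E) (del X)). rewrite <- braid_nat.
    ra. grp (runit E). rewrite braid_unit_l. unfold m. ra. reflexivity. }
  destruct (Hnc _ _ Hpi) as [kappa [Hkd Hk]]. unfold is_dilation in Hkd.
  assert (Hkl : lunit X ∘ tensm (del X) (idm X) ∘ kappa = idm X).
  { transitivity (lunit X ∘ tensm (del E) (idm X) ∘ (tensm m (idm X) ∘ kappa)).
    - ra. grp (tensm (del E) (idm X)). rewrite <- tens_comp, comp_id_l.
      rewrite (del_unique _ _ (del E ∘ m)). reflexivity.
    - rewrite <- Hk. ra. grp (tensm (del E) (idm X)). rewrite <- braid_nat.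
      ra. grp (lunit X). rewrite braid_unit_r. rewrite comp_assoc. exact Hd. }
  assert (Hc_dil : runit X ∘ tensm (idm X) (del X) ∘ (braid X X ∘ kappa) = idm X).
  { ra. grp (tensm (idm X) (del X)). rewrite <- braid_nat. ra. grp (runit X).
    rewrite braid_unit_l, comp_assoc. exact Hkl. }
  assert (Hc_l : lunit X ∘ tensm (del X) (idm X) ∘ (braid X X ∘ kappa) = idm X).
  { ra. grp (tensm (del X) (idm X)). rewrite <- braid_nat. ra. grp (lunit X).
    rewrite braid_unit_r, comp_assoc. exact Hkd. }
  assert (Hiota : tensm (idm X) m ∘ (braid X X ∘ kappa) = iota).
  { grp (tensm (idm X) m). rewrite <- braid_nat. ra. rewrite <- Hk.
    grp (braid E X). rewrite braid_sym, comp_id_l. reflexivity. }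
  exists (braid X X ∘ kappa). split; [split|].
  - exact Hc_dil.
  - intros E' pi' Hpi'. destruct (Hin E' pi' Hpi') as [[f Hf] _]. split.
    + exists (f ∘ m). rewrite tens_idl_comp, <- comp_assoc, Hiota. exact Hf.
    + intros f1 f2 H1 H2.
      destruct (Hin _ _ Hc_dil) as [[g Hg] _].
      assert (Hgm : g ∘ m = idm X).
      { rewrite <- Hc_l, <- Hg. unfold m. ra. grp (tensm (del X) (idm X)).
        rewrite <- tens_comp, comp_id_l, comp_id_r.
        rewrite (tens_split (del X) g). ra. grp (lunit X). rewrite lunit_nat. ra. reflexivity. }
      assert (Hd1 : dil_equal iota (f1 ∘ g) (f2 ∘ g)).
      { apply (proj2 (Hin E' pi' Hpi')); rewrite tens_idl_comp, <- comp_assoc, Hg; assumption. }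
      intros F rho Hrho.
      assert (Hr : is_dilation iota (tensm (tensm (idm X) m) (idm F) ∘ rho)).
      { unfold is_dilation in *. rewrite <- Hiota, <- Hrho. ra.
        grp (tensm (idm (tens X E)) (del F)). rewrite <- tens_comp, comp_id_l, comp_id_r.
        rewrite (tens_split2 (tensm (idm X) m) (del F)). ra. grp (runit (tens X E)).
        rewrite runit_nat. ra. reflexivity. }
      specialize (Hd1 F _ Hr).
      rewrite !comp_assoc, !tt_comp in Hd1.
      rewrite <- !comp_assoc, Hgm, !comp_id_r in Hd1. exact Hd1.
  - exact Hc_l.
Qed.


Lemma T1 (A B : ob C) :
  assoc A unit B ∘ tensm (runit_inv A) (idm B) = tensm (idm A) (lunit_inv B).
Proof.
  apply (mono_cancel (tensm (idm A) (lunit B)) (tensm (idm A) (lunit_inv B))).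
  { rewrite <- tens_idl_comp, lunit_iso2, tens_id. reflexivity. }
  rewrite comp_assoc, triangle, <- tens_idr_comp, runit_iso1, tens_id.
  rewrite <- tens_idl_comp, lunit_iso1, tens_id. reflexivity.
Qed.

Lemma T2 (A B : ob C) :
  assoc_inv A unit B ∘ tensm (idm A) (lunit_inv B) = tensm (runit_inv A) (idm B).
Proof. rewrite <- T1, comp_assoc, assoc_iso2, comp_id_l. reflexivity. Qed.

Lemma K1i' (A B : ob C) :
  assoc unit A B ∘ tensm (lunit_inv A) (idm B) = lunit_inv (tens A B).
Proof.
  apply (mono_cancel (lunit (tens A B)) (lunit_inv (tens A B))); [apply lunit_iso2|].
  rewrite comp_assoc, kelly_l, <- tens_idr_comp, lunit_iso1, tens_id, lunit_iso1. reflexivity.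
Qed.

Lemma K1i (A B : ob C) :
  assoc_inv unit A B ∘ lunit_inv (tens A B) = tensm (lunit_inv A) (idm B).
Proof. rewrite <- K1i', comp_assoc, assoc_iso2, comp_id_l. reflexivity. Qed.

Lemma B1i (X : ob C) : braid X unit ∘ runit_inv X = lunit_inv X.
Proof.
  apply (mono_cancel (lunit X) (lunit_inv X)); [apply lunit_iso2|].
  rewrite comp_assoc, braid_unit_r, runit_iso1, lunit_iso1. reflexivity.
Qed.

Lemma B2i (X : ob C) : braid unit X ∘ lunit_inv X = runit_inv X.
Proof.
  apply (mono_cancel (runit X) (runit_inv X)); [apply runit_iso2|].
  rewrite comp_assoc, braid_unit_l, runit_iso1, lunit_iso1. reflexivity.
Qed.

Lemma K2i (A B : ob C) :
  runit (tens A B) ∘ (assoc_inv A B unit ∘ tensm (idm A) (runit_inv B)) = idm _.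
Proof.
  rewrite <- kelly_r. ra. grp (assoc A B unit). rewrite assoc_iso1, comp_id_l.
  rewrite <- tens_idl_comp, runit_iso1, tens_id. reflexivity.
Qed.

Lemma assoc_inv_nat (A A' B B' D D' : ob C) (f : hom C A A') (g : hom C B B') (h : hom C D D') :
  assoc_inv A' B' D' ∘ tensm f (tensm g h) = tensm (tensm f g) h ∘ assoc_inv A B D.
Proof.
  apply (mono_cancel (assoc A' B' D') (assoc_inv A' B' D')); [apply assoc_iso2|].
  transitivity (tensm f (tensm g h)).
  - rewrite comp_assoc, assoc_iso1, comp_id_l. reflexivity.
  - rewrite comp_assoc, assoc_nat, <- comp_assoc, assoc_iso1, comp_id_r. reflexivity.
Qed.

Lemma lunit_inv_nat (A B : ob C) (f : hom C A B) :
  tensm (idm unit) f ∘ lunit_inv A = lunit_inv B ∘ f.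
Proof.
  apply (mono_cancel (lunit B) (lunit_inv B)); [apply lunit_iso2|].
  transitivity f.
  - rewrite comp_assoc, lunit_nat, <- comp_assoc, lunit_iso1, comp_id_r. reflexivity.
  - rewrite comp_assoc, lunit_iso1, comp_id_l. reflexivity.
Qed.

Definition ms4 (A B C' D : ob C) : hom C (tens (tens A B) (tens C' D)) (tens (tens A C') (tens B D)) :=
  assoc_inv A C' (tens B D)
  ∘ tensm (idm A) (assoc C' B D ∘ tensm (braid B C') (idm D) ∘ assoc_inv B C' D)
  ∘ assoc A B (tens C' D).

Lemma ms4_eq (X Y : ob C) : middle_swap C X Y = ms4 X X Y Y.
Proof. reflexivity. Qed.

Lemma inner_nat (B B' C' C'' D D' : ob C) (b : hom C B B') (c : hom C C' C'') (d : hom C D D') :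
  (assoc C'' B' D' ∘ (tensm (braid B' C'') (idm D') ∘ assoc_inv B' C'' D')) ∘ tensm b (tensm c d)
  = tensm c (tensm b d) ∘ (assoc C' B D ∘ (tensm (braid B C') (idm D) ∘ assoc_inv B C' D)).
Proof.
  ra. rewrite assoc_inv_nat. grp (tensm (braid B' C'') (idm D')).
  rewrite <- tens_comp, braid_nat, comp_id_l, <- (comp_id_r _ _ _ d), tens_comp.
  ra. grp (assoc C'' B' D'). rewrite assoc_nat. ra. rewrite comp_id_r. reflexivity.
Qed.

Lemma ms4_nat (A A' B B' C' C'' D D' : ob C) (a : hom C A A') (b : hom C B B')
  (c : hom C C' C'') (d : hom C D D') :
  ms4 A' B' C'' D' ∘ tensm (tensm a b) (tensm c d) = tensm (tensm a c) (tensm b d) ∘ ms4 A B C' D.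
Proof.
  unfold ms4. ra. rewrite assoc_nat. grp (tensm (idm A')
     (assoc C'' B' D' ∘ (tensm (braid B' C'') (idm D') ∘ assoc_inv B' C'' D'))).
  rewrite <- tens_comp, inner_nat, comp_id_l, <- (comp_id_r _ _ _ a), tens_comp.
  ra. grp (assoc_inv A' C'' (tens B' D')). rewrite assoc_inv_nat. ra. rewrite comp_id_r. reflexivity.
Qed.

Lemma CohA (X Y : ob C) :
  runit (tens X Y) ∘ (tensm (tensm (idm X) (idm Y)) (lunit unit)
     ∘ (ms4 X unit Y unit ∘ tensm (runit_inv X) (runit_inv Y))) = idm _.
Proof.
  unfold ms4. rewrite (tens_split2 (runit_inv X) (runit_inv Y)). ra.
  grp (assoc X unit (tens Y unit)). rewrite T1.
  grp (tensm (idm X) (assoc Y unit unit ∘ (tensm (braid unit Y) (idm unit) ∘ assoc_inv unit Y unit))).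
  rewrite <- !tens_idl_comp.
  assert (N : assoc Y unit unit ∘ (tensm (braid unit Y) (idm unit) ∘ assoc_inv unit Y unit)
              ∘ lunit_inv (tens Y unit) ∘ runit_inv Y
              = tensm (idm Y) (lunit_inv unit) ∘ runit_inv Y).
  { ra. grp (assoc_inv unit Y unit). rewrite K1i.
    grp (tensm (braid unit Y) (idm unit)). rewrite <- tens_idr_comp, B2i. rewrite comp_assoc, T1. reflexivity. }
  rewrite N. rewrite tens_idl_comp.
  grp (tensm (tensm (idm X) (idm Y)) (lunit unit)). rewrite <- assoc_inv_nat.
  ra. grp (tensm (idm X) (tensm (idm Y) (lunit unit))).
  rewrite <- !tens_idl_comp, lunit_iso1, !tens_id, comp_id_l.
  apply K2i.
Qed.

Lemma CohB (X Y : ob C) :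
  lunit (tens X Y) ∘ (tensm (runit unit) (tensm (idm X) (idm Y))
     ∘ (ms4 unit X unit Y ∘ tensm (lunit_inv X) (lunit_inv Y))) = idm _.
Proof.
  unfold ms4. rewrite (tens_split2 (lunit_inv X) (lunit_inv Y)). ra.
  grp (assoc unit X (tens unit Y)). rewrite K1i'.
  rewrite <- lunit_inv_nat.
  ra. grp (tensm (idm unit) (assoc unit X Y ∘ (tensm (braid X unit) (idm Y) ∘ assoc_inv X unit Y))).
  rewrite <- tens_idl_comp.
  assert (N : assoc unit X Y ∘ (tensm (braid X unit) (idm Y) ∘ assoc_inv X unit Y)
              ∘ tensm (idm X) (lunit_inv Y) = lunit_inv (tens X Y)).
  { ra. rewrite T2. rewrite <- tens_idr_comp, B1i, K1i'.
    reflexivity. }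
  rewrite N. grp (assoc_inv unit unit (tens X Y)). rewrite T2, tens_id.
  grp (tensm (runit unit) (idm (tens X Y))). rewrite <- tens_idr_comp, runit_iso1, tens_id, comp_id_l.
  apply lunit_iso1.
Qed.


Lemma U (X E' : ob C) (c : hom C X (tens X X)) (d : hom C X (tens X E')) :
  initial_dilation (idm X) c -> lunit X ∘ tensm (del X) (idm X) ∘ c = idm X ->
  is_dilation (idm X) d ->
  d = tensm (idm X) (lunit E' ∘ tensm (del X) (idm E') ∘ d) ∘ c.
Proof.
  intros [_ Hc] Hl Hd. destruct (Hc _ d Hd) as [[f Hf] _].
  assert (Hm : lunit E' ∘ tensm (del X) (idm E') ∘ d = f).
  { rewrite <- Hf. ra. grp (tensm (del X) (idm E')). rewrite <- tens_comp, comp_id_l, comp_id_r.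
    rewrite (tens_split (del X) f). ra. grp (lunit E'). rewrite lunit_nat. ra.
    grp (lunit X). rewrite Hl, comp_id_r. reflexivity. }
  rewrite Hm. symmetry; exact Hf.
Qed.

Lemma markov_of (copy : forall X : ob C, hom C X (tens X X)) :
  (forall X, initial_dilation (idm X) (copy X) /\
             lunit X ∘ tensm (del X) (idm X) ∘ copy X = idm X) ->
  is_markov_copy copy.
Proof.
  intros Hc.
  assert (Hr : forall X, runit X ∘ tensm (idm X) (del X) ∘ copy X = idm X)
    by (intro X; exact (proj1 (proj1 (Hc X)))).
  assert (Hl : forall X, lunit X ∘ tensm (del X) (idm X) ∘ copy X = idm X)
    by (intro X; exact (proj2 (Hc X))).
  assert (Uid : forall X d, is_dilation (idm X) d ->
                 lunit X ∘ tensm (del X) (idm X) ∘ d = idm X -> d = copy X).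
  { intros X d Hd Hm. rewrite (U X X (copy X) d (proj1 (Hc X)) (Hl X) Hd), Hm, tens_id, comp_id_l.
    reflexivity. }
  assert (HrI : forall X, tensm (idm X) (del X) ∘ copy X = runit_inv X).
  { intro X. apply (mono_cancel (runit X) (runit_inv X)); [apply runit_iso2|].
    rewrite comp_assoc, Hr, runit_iso1. reflexivity. }
  assert (HlI : forall X, tensm (del X) (idm X) ∘ copy X = lunit_inv X).
  { intro X. apply (mono_cancel (lunit X) (lunit_inv X)); [apply lunit_iso2|].
    rewrite comp_assoc, Hl, lunit_iso1. reflexivity. }
  unfold is_markov_copy. split; [exact Hl|]. split; [exact Hr|]. split; [|split; [|split]].
  - intros X. destruct (Hc X) as [Hi _].
    assert (Hd : is_dilation (idm X) (assoc X X X ∘ tensm (copy X) (idm X) ∘ copy X)).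
    { unfold is_dilation.
      rewrite <- (del_unique _ _ (lunit unit ∘ tensm (del X) (del X))).
      rewrite (tens_idl_comp (tensm (del X) (del X)) (lunit unit)).
      ra. grp (tensm (idm X) (tensm (del X) (del X))). rewrite <- assoc_nat.
      ra. grp (tensm (idm X) (lunit unit)). rewrite triangle.
      grp (tensm (runit X) (idm unit)). rewrite <- tens_comp, comp_id_l.
      grp (tensm (runit X ∘ tensm (idm X) (del X)) (del X)). rewrite <- tens_comp, comp_id_r.
      rewrite Hr, comp_assoc, Hr. reflexivity. }
    assert (Hm : lunit (tens X X) ∘ tensm (del X) (idm (tens X X))
                 ∘ (assoc X X X ∘ tensm (copy X) (idm X) ∘ copy X) = copy X).
    { replace (idm (tens X X)) with (tensm (idm X) (idm X)) by apply tens_id.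
      ra. grp (tensm (del X) (tensm (idm X) (idm X))). rewrite <- assoc_nat.
      ra. grp (lunit (tens X X)). rewrite kelly_l.
      grp (tensm (lunit X) (idm X)). rewrite <- tens_comp, comp_id_l.
      grp (tensm (lunit X ∘ tensm (del X) (idm X)) (idm X)). rewrite <- tens_comp, comp_id_l.
      rewrite Hl, tens_id, comp_id_l. reflexivity. }
    pose proof (U X (tens X X) (copy X) _ Hi (Hl X) Hd) as Heq.
    rewrite Hm in Heq. exact Heq.
  - intros X. apply Uid.
    + unfold is_dilation. ra. grp (tensm (idm X) (del X)). rewrite <- braid_nat. ra.
      grp (runit X). rewrite braid_unit_l, comp_assoc. apply Hl.
    + ra. grp (tensm (del X) (idm X)). rewrite <- braid_nat. ra.
      grp (lunit X). rewrite braid_unit_r, comp_assoc. apply Hr.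
  - intros X Y. symmetry. apply Uid.
    + unfold is_dilation. rewrite ms4_eq.
      rewrite <- (del_unique _ _ (lunit unit ∘ tensm (del X) (del Y))).
      rewrite (tens_idl_comp (tensm (del X) (del Y)) (lunit unit)).
      replace (idm (tens X Y)) with (tensm (idm X) (idm Y)) by apply tens_id.
      ra. grp (tensm (tensm (idm X) (idm Y)) (tensm (del X) (del Y))). rewrite <- ms4_nat.
      ra.
      rewrite <- tens_comp, HrI, HrI.
      rewrite CohA. symmetry. apply tens_id.
    + rewrite ms4_eq.
      rewrite <- (del_unique _ _ (runit unit ∘ tensm (del X) (del Y))).
      rewrite (tens_idr_comp (tensm (del X) (del Y)) (runit unit)).
      replace (idm (tens X Y)) with (tensm (idm X) (idm Y)) by apply tens_id.
      ra. grp (tensm (tensm (del X) (del Y)) (tensm (idm X) (idm Y))). rewrite <- ms4_nat.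
      ra.
      rewrite <- tens_comp, HlI, HlI.
      rewrite CohB. symmetry. apply tens_id.
  - intros X Y. symmetry. apply del_unique.
Qed.

End Coh.

Theorem theorem4p19 (C : SemicartSMC) :
  ((exists copy : forall X : ob C, hom C X (tens X X),
       is_markov_copy copy /\ forall X, initial_dilation (idm X) (copy X))
   <->
   (forall X : ob C, exists (E : ob C) (iota : hom C X (tens X E)),
       initial_dilation (idm X) iota /\
       non_creative (lunit E ∘ tensm (del X) (idm E) ∘ iota)))
  /\
  (forall copy1 copy2 : forall X : ob C, hom C X (tens X X),
      is_markov_copy copy1 -> (forall X, initial_dilation (idm X) (copy1 X)) ->
      is_markov_copy copy2 -> (forall X, initial_dilation (idm X) (copy2 X)) ->
      forall X, copy1 X = copy2 X).
Proof.
  split; [split|].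
  - intros [copy [HM Hin]] X. exists X, (copy X). split; [apply Hin|].
    destruct HM as [Hl _]. rewrite Hl.
    intros E pi Hpi. exists pi. split; [exact Hpi|]. rewrite tens_id, comp_id_l. reflexivity.
  - intros H.
    assert (H' : forall X, exists c : hom C X (tens X X), initial_dilation (idm X) c /\
                   lunit X ∘ tensm (del X) (idm X) ∘ c = idm X).
    { intros X. destruct (H X) as [E [iota [H1 H2]]]. exact (exists_copy C X E iota H1 H2). }
    exists (fun X => proj1_sig (constructive_indefinite_description _ (H' X))).
    assert (Hcp : forall X, initial_dilation (idm X) (proj1_sig (constructive_indefinite_description _ (H' X)))
                  /\ lunit X ∘ tensm (del X) (idm X) ∘ proj1_sig (constructive_indefinite_description _ (H' X)) = idm X)
      by (intro X; exact (proj2_sig (constructive_indefinite_description _ (H' X)))).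
    split.
    + apply markov_of. exact Hcp.
    + intro X. exact (proj1 (Hcp X)).
  - intros copy1 copy2 HM1 Hi1 HM2 Hi2 X.
    pose proof (U C X X (copy1 X) (copy2 X) (Hi1 X) (proj1 HM1 X) (proj1 (Hi2 X))) as Heq.
    rewrite (proj1 HM2 X), tens_id, comp_id_l in Heq. symmetry; exact Heq.
Qed.
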